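(* For $n\in\mathbb{N}^\star$ let $\phi_n(x)=\int_0^\pi e^{-2x\sin\eta}e^{2in\eta}\,\mathrm{d}\eta$ and $\varphi_n(x)=n\phi_n(nx)$. Then for every $x>0$ and $n\ge1$, $$\frac{4n^2}{4n^2+1}\frac{x}{1+x^2}\le\varphi_n(x)\le\frac{4n^2}{4n^2-1}\frac{x}{1+x^2}$$ and $$\frac{4n^2}{4n^2+1}\frac{x}{n^2+x^2}\le\phi_n(x)\le\frac{4n^2}{4n^2-1}\frac{x}{n^2+x^2}.$$ *)

(* Defs.v *)
From Stdlib Require Import Reals.
From Coquelicot Require Import Coquelicot.
Open Scope R_scope.

Definition cexpi (t : R) : C := (cos t, sin t).

Definition phi (n : nat) (x : R) : C :=
  @RInt C_R_CompleteNormedModule (fun eta : R => Cmult (RtoC (exp (-2 * x * sin eta))) (cexpi (2 * INR n * eta))) 0 PI.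

Definition varphi (n : nat) (x : R) : C :=
  Cmult (RtoC (INR n)) (phi n (INR n * x)).

(* Main.v *)
Require Import Defs.
From Stdlib Require Import Reals Lra Lia Nsatz.
From Coquelicot Require Import Coquelicot.
Open Scope R_scope.

Definition P (g : R -> R) (x : R) : R := RInt (fun t => exp (-2 * x * sin t) * g t) 0 PI.

Lemma cont_E (g : R -> R) x : (forall t, continuous g t) -> forall t, continuous (fun t => exp (-2*x*sin t) * g t) t.
Proof.
  intros Hg t. apply (continuous_mult (fun t => exp (-2*x*sin t)) g).
  - apply continuous_exp_comp. apply (@ex_derive_continuous R_AbsRing R_NormedModule). auto_derive. auto.
  - apply Hg.
Qed.

Lemma exP (g : R -> R) x : (forall t, continuous g t) -> ex_RInt (fun t => exp(-2*x*sin t)*g t) 0 PI.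
Proof. intros Hg. apply (@ex_RInt_continuous R_CompleteNormedModule). intros; apply cont_E; auto. Qed.

Lemma Derive_E (g : R -> R) u t : Derive (fun z => exp (-2*z*sin t) * g t) u = exp (-2*u*sin t) * (-2 * sin t * g t).
Proof.
  apply is_derive_unique. auto_derive; auto. ring.
Qed.

Lemma cont2d_E (g : R -> R) x t : (forall t, continuous g t) ->
  continuity_2d_pt (fun u v => exp (-2*u*sin v) * g v) x t.
Proof.
  intros Hg.
  apply continuity_2d_pt_mult.
  - apply (continuity_1d_2d_pt_comp exp (fun u v => -2*u*sin v)).
    + apply derivable_continuous_pt, derivable_pt_exp.
    + apply continuity_2d_pt_mult.
      * apply continuity_2d_pt_mult. apply continuity_2d_pt_const. apply continuity_2d_pt_id1.
      * apply (continuity_1d_2d_pt_comp sin (fun u v => v)).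
        apply derivable_continuous_pt, derivable_pt_sin. apply continuity_2d_pt_id2.
  - apply (continuity_1d_2d_pt_comp g (fun u v => v)).
    apply continuity_pt_filterlim, Hg. apply continuity_2d_pt_id2.
Qed.

Lemma P_deriv (g : R -> R) : (forall t, continuous g t) -> forall x, is_derive (P g) x (P (fun t => -2 * sin t * g t) x).
Proof.
  intros Hg x. unfold P.
  pose proof (is_derive_RInt_param (fun u t => exp (-2*u*sin t) * g t) 0 PI x) as H.
  erewrite RInt_ext in H. apply H.
  - apply filter_forall. intros y t _. auto_derive. auto.
  - intros t _. eapply continuity_2d_pt_ext.
    intros u v. symmetry. apply Derive_E.
    apply (cont2d_E (fun v => -2 * sin v * g v)).
    intros s. apply (continuous_mult (fun s => -2 * sin s) g).
    apply (@ex_derive_continuous R_AbsRing R_NormedModule). auto_derive. auto. apply Hg.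
  - apply filter_forall. intros y. apply exP; auto.
  - intros t _. simpl. apply Derive_E.
Qed.

Lemma P_lin (a b c : R) (g h k : R -> R) x :
  (forall t, continuous g t) -> (forall t, continuous h t) -> (forall t, continuous k t) ->
  is_RInt (fun t => exp (-2*x*sin t) * (a * g t + b * h t + c * k t)) 0 PI
   (a * P g x + b * P h x + c * P k x).
Proof.
  intros Hg Hh Hk.
  apply (@is_RInt_ext R_NormedModule (fun t => plus (plus (scal a (exp (-2*x*sin t) * g t)) (scal b (exp (-2*x*sin t) * h t))) (scal c (exp (-2*x*sin t) * k t)))).
  - intros t _. unfold plus, scal; simpl. unfold mult; simpl. ring.
  - apply (@is_RInt_plus R_NormedModule); [apply (@is_RInt_plus R_NormedModule)|];
    apply (@is_RInt_scal R_NormedModule); apply (@RInt_correct R_CompleteNormedModule); apply exP; auto.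
Qed.

Definition g0 (N t : R) := cos (2 * N * t).
Definition g1 (N t : R) := -2 * sin t * g0 N t.
Definition g2 (N t : R) := -2 * sin t * g1 N t.

Lemma cont_g0 N t : continuous (g0 N) t.
Proof. apply (@ex_derive_continuous R_AbsRing R_NormedModule). unfold g0. auto_derive. auto. Qed.
Lemma cont_g1 N t : continuous (g1 N) t.
Proof. apply (@ex_derive_continuous R_AbsRing R_NormedModule). unfold g1, g0. auto_derive. auto. Qed.
Lemma cont_g2 N t : continuous (g2 N) t.
Proof. apply (@ex_derive_continuous R_AbsRing R_NormedModule). unfold g2, g1, g0. auto_derive. auto. Qed.

Lemma exd_g0 N t : ex_derive (g0 N) t.
Proof. unfold g0. auto_derive. auto. Qed.
Lemma exd_g1 N t : ex_derive (g1 N) t.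
Proof. unfold g1, g0. auto_derive. auto. Qed.

Lemma cos2N (n : nat) : cos (2 * INR n * PI) = 1.
Proof. rewrite <- (Rplus_0_l (2 * INR n * PI)). rewrite cos_period. apply cos_0. Qed.
Lemma sin2N (n : nat) : sin (2 * INR n * PI) = 0.
Proof. rewrite <- (Rplus_0_l (2 * INR n * PI)). rewrite sin_period. apply sin_0. Qed.

Definition GG (N x t : R) := (-2 * x * cos t * exp (-2*x*sin t) * cos (2*N*t) + 2 * N * exp (-2*x*sin t) * sin (2*N*t)) / 4.

Lemma GG_deriv N x t : is_derive (GG N x) t
   (exp (-2*x*sin t) * ((N^2 + x^2) * g0 N t + (- (x/4)) * g1 N t + (- (x^2/4)) * g2 N t)).
Proof.
  unfold GG, g0, g1, g2. auto_derive. auto.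
  pose proof (sin2_cos2 t) as Hs. unfold Rsqr in Hs. unfold g1, g0. apply Rminus_diag_uniq. field_simplify. replace (sin t ^ 2) with (1 - cos t ^ 2) by (rewrite <- Hs; ring). field.
Qed.

Lemma ode (n : nat) x :
  (INR n ^ 2 + x ^ 2) * P (g0 (INR n)) x + (- (x / 4)) * P (g1 (INR n)) x + (- (x ^ 2 / 4)) * P (g2 (INR n)) x = x.
Proof.
  pose proof (P_lin (INR n ^ 2 + x ^ 2) (- (x / 4)) (- (x ^ 2 / 4)) (g0 (INR n)) (g1 (INR n)) (g2 (INR n)) x
     (cont_g0 _) (cont_g1 _) (cont_g2 _)) as H1.
  assert (H2 : is_RInt (fun t => exp (-2*x*sin t) * ((INR n ^ 2 + x ^ 2) * g0 (INR n) t + (- (x / 4)) * g1 (INR n) t + (- (x ^ 2 / 4)) * g2 (INR n) t)) 0 PI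
     (minus (GG (INR n) x PI) (GG (INR n) x 0))).
  { apply (@is_RInt_derive R_CompleteNormedModule).
    - intros t _. apply GG_deriv.
    - intros t _. apply (@ex_derive_continuous R_AbsRing R_NormedModule). unfold g2, g1, g0. auto_derive. auto. }
  apply (@is_RInt_unique R_CompleteNormedModule) in H1. apply (@is_RInt_unique R_CompleteNormedModule) in H2. rewrite H1 in H2.
  rewrite H2. unfold minus, plus, opp; simpl. unfold GG. rewrite sin_PI, cos_PI, sin_0, cos_0, cos2N, sin2N.
  rewrite !Rmult_0_r, exp_0, cos_0, sin_0. field.
Qed.

Lemma deriv_pos_side (f : R -> R) x0 l : is_derive f x0 l -> 0 < l ->
  exists d, 0 < d /\ (forall y, x0 - d < y < x0 -> f y < f x0) /\ (forall y, x0 < y < x0 + d -> f x0 < f y).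
Proof.
  intros Hd Hl. apply is_derive_Reals in Hd.
  destruct (Hd l Hl) as [delta Hdel].
  exists delta. split; [apply cond_pos|]. split.
  - intros y Hy. assert (Hh : y - x0 <> 0) by lra.
    assert (Ha : Rabs (y - x0) < delta) by (rewrite Rabs_left; lra).
    specialize (Hdel _ Hh Ha). replace (x0 + (y - x0)) with y in Hdel by ring.
    apply Rabs_def2 in Hdel. destruct Hdel as [_ H2].
    set (q := (f y - f x0) / (y - x0)) in *.
    assert (E : f y - f x0 = q * (y - x0)) by (unfold q; field; auto).
    nra.
  - intros y Hy. assert (Hh : y - x0 <> 0) by lra.
    assert (Ha : Rabs (y - x0) < delta) by (rewrite Rabs_right; lra).
    specialize (Hdel _ Hh Ha). replace (x0 + (y - x0)) with y in Hdel by ring.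
    apply Rabs_def2 in Hdel. destruct Hdel as [_ H2].
    set (q := (f y - f x0) / (y - x0)) in *.
    assert (E : f y - f x0 = q * (y - x0)) by (unfold q; field; auto).
    nra.
Qed.

Lemma interior_min (f : R -> R) a b z l : is_derive f z l -> a < z < b ->
  (forall y, a <= y <= b -> f z <= f y) -> l = 0.
Proof.
  intros Hd Hz Hm.
  destruct (Rtotal_order l 0) as [Hl|[Hl|Hl]]; auto.
  - assert (Hd' : is_derive (fun y => - f y) z (- l)) by (apply (@is_derive_opp R_AbsRing R_NormedModule); auto).
    destruct (deriv_pos_side _ _ _ Hd') as [d [Hd0 [_ HR]]]; [lra|].
    set (y := Rmin (z + d/2) ((z + b)/2)).
    assert (z < y < z + d) by (unfold y; split; [apply Rmin_glb_lt; lra| pose proof (Rmin_l (z + d/2) ((z+b)/2)); lra]).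
    assert (y <= (z+b)/2) by (unfold y; apply Rmin_r).
    specialize (HR y H). assert (f z <= f y) by (apply Hm; lra). lra.
  - destruct (deriv_pos_side _ _ _ Hd Hl) as [d [Hd0 [HL _]]].
    set (y := Rmax (z - d/2) ((a + z)/2)).
    assert (z - d < y < z) by (unfold y; split; [pose proof (Rmax_l (z - d/2) ((a+z)/2)); lra | apply Rmax_lub_lt; lra]).
    assert ((a+z)/2 <= y) by (unfold y; apply Rmax_r).
    specialize (HL y H). assert (f z <= f y) by (apply Hm; lra). lra.
Qed.

Lemma maxprin (e e1 e2 : R -> R) x1 :
  0 < x1 ->
  (forall x, is_derive e x (e1 x)) -> (forall x, is_derive e1 x (e2 x)) ->
  (forall x, 0 < x -> e x < 0 -> e1 x = 0 -> e2 x < 0) ->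
  (forall eps, 0 < eps -> exists a, 0 < a < x1 /\ - eps < e a) ->
  (forall eps, 0 < eps -> exists b, x1 < b /\ - eps < e b) ->
  0 <= e x1.
Proof.
  intros Hx1 D1 D2 Hode Ha Hb.
  destruct (Rle_or_lt 0 (e x1)) as [|Hneg]; auto. exfalso.
  destruct (Ha (- e x1)) as [a [Ha1 Ha2]]; [lra|].
  destruct (Hb (- e x1)) as [b [Hb1 Hb2]]; [lra|].
  assert (Hcont : forall c, continuity_pt e c).
  { intros c. apply continuity_pt_filterlim. apply (@ex_derive_continuous R_AbsRing R_NormedModule).
    eexists; apply D1. }
  destruct (continuity_ab_min e a b) as [x0 [Hmin Hx0]]; [lra| intros; apply Hcont |].
  assert (e x0 <= e x1) by (apply Hmin; lra).
  assert (Hx0a : a < x0) by (destruct (Req_dec x0 a); [subst; lra| lra]).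
  assert (Hx0b : x0 < b) by (destruct (Req_dec x0 b); [subst; lra| lra]).
  assert (He1 : e1 x0 = 0) by (eapply interior_min; eauto).
  assert (He2 : e2 x0 < 0) by (apply Hode; lra).
  assert (Hd' : is_derive (fun y => - e1 y) x0 (- e2 x0)) by (apply (@is_derive_opp R_AbsRing R_NormedModule); auto).
  destruct (deriv_pos_side _ _ _ Hd') as [d [Hd0 [HL _]]]; [lra|].
  set (y := Rmax (x0 - d/2) ((a + x0)/2)).
  assert (Hy : x0 - d < y < x0) by (unfold y; split; [pose proof (Rmax_l (x0 - d/2) ((a+x0)/2)); lra | apply Rmax_lub_lt; lra]).
  assert (Hy2 : (a+x0)/2 <= y) by (unfold y; apply Rmax_r).
  assert (Hpos : e1 y > 0) by (specialize (HL y Hy); lra).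
  destruct (MVT_gen e y x0 e1) as [c [Hc Hmvt]].
  { intros; apply D1. }
  { intros; apply Hcont. }
  rewrite Rmin_left in Hc by lra. rewrite Rmax_right in Hc by lra.
  assert (e1 c >= 0).
  { destruct (Req_dec c x0). subst; lra. specialize (HL c). lra. }
  assert (e y <= e x0) by nra.
  assert (e x0 <= e y) by (apply Hmin; lra).
  assert (Hymin : forall z, a <= z <= b -> e y <= e z) by (intros z Hz; specialize (Hmin z Hz); lra).
  assert (e1 y = 0) by (eapply interior_min with (a := a) (b := b); eauto; lra).
  lra.
Qed.

Lemma sE_bound b s : 0 < b -> 0 <= s -> s * exp (-2 * b * s) <= / (2 * b).
Proof.
  intros Hb Hs.
  pose proof (exp_ineq1_le (2 * b * s)) as H1.
  assert (H2 : exp (2 * b * s) * exp (-2 * b * s) = 1).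
  { rewrite <- exp_plus. replace (2 * b * s + -2 * b * s) with 0 by ring. apply exp_0. }
  pose proof (exp_pos (-2 * b * s)).
  apply (Rmult_le_reg_l (2 * b)); [lra|]. rewrite Rinv_r by lra. nra.
Qed.

Definition HH (b t : R) := - cos t * exp (-2 * b * sin t) / (2 * b) + t / (2 * b).
Definition dHH (b t : R) := sin t * exp (-2 * b * sin t) / (2 * b) + cos t ^ 2 * exp (-2 * b * sin t) + / (2 * b).

Lemma HH_deriv b t : 0 < b -> is_derive (HH b) t (dHH b t).
Proof. intros Hb. unfold HH, dHH. auto_derive. lra. field. lra. Qed.

Lemma dHH_cont b t : 0 < b -> continuous (dHH b) t.
Proof. intros Hb. apply (@ex_derive_continuous R_AbsRing R_NormedModule). unfold dHH. auto_derive. lra. Qed.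

Lemma int_dHH b : 0 < b -> is_RInt (dHH b) 0 PI ((2 + PI) / (2 * b)).
Proof.
  intros Hb.
  replace ((2 + PI) / (2 * b)) with (minus (HH b PI) (HH b 0)).
  apply (@is_RInt_derive R_CompleteNormedModule).
  - intros; apply HH_deriv; auto.
  - intros; apply dHH_cont; auto.
  - unfold minus, plus, opp; simpl. unfold HH. rewrite sin_PI, cos_PI, sin_0, cos_0, Rmult_0_r, exp_0. field. lra.
Qed.

Lemma int_mdHH b : 0 < b -> is_RInt (fun t => - dHH b t) 0 PI (- ((2 + PI) / (2 * b))).
Proof. intros Hb. apply (@is_RInt_opp R_NormedModule). apply int_dHH; auto. Qed.

Lemma pointwise b N t : 0 < b -> 0 <= t <= PI ->
  Rabs (exp (-2 * b * sin t) * g0 N t) <= dHH b t.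
Proof.
  intros Hb Ht. unfold g0, dHH.
  pose proof (sin_ge_0 t ltac:(lra) ltac:(lra)) as Hs0.
  pose proof (SIN_bound t) as Hs1.
  pose proof (COS_bound (2 * N * t)) as Hc.
  pose proof (sin2_cos2 t) as Hsc. unfold Rsqr in Hsc.
  pose proof (exp_pos (-2 * b * sin t)) as HE.
  pose proof (sE_bound b (sin t) Hb Hs0) as HsE.
  set (E := exp (-2 * b * sin t)) in *.
  assert (0 <= sin t * E / (2 * b)).
  { apply Rmult_le_pos. apply Rmult_le_pos; lra. left; apply Rinv_0_lt_compat; lra. }
  rewrite Rabs_mult, (Rabs_right E) by lra.
  assert (Rabs (cos (2 * N * t)) <= 1) by (apply Rabs_le; lra).
  assert (E * Rabs (cos (2 * N * t)) <= E) by nra.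
  assert (Hss : 0 <= (sin t - sin t * sin t) * E) by (apply Rmult_le_pos; nra).
  assert (E <= sin t * E + cos t ^ 2 * E).
  { replace E with ((sin t * sin t + cos t * cos t) * E) at 1 by (rewrite Hsc; ring). nra. }
  lra.
Qed.

Lemma P_bound n b : 0 < b -> Rabs (P (g0 (INR n)) b) <= (2 + PI) / (2 * b).
Proof.
  intros Hb. unfold P.
  pose proof (exP (g0 (INR n)) b (cont_g0 _)) as Hex.
  apply Rabs_le. split.
  - rewrite <- (is_RInt_unique _ _ _ _ (int_mdHH b Hb)).
    apply RInt_le. left; apply PI_RGT_0. eexists; apply int_mdHH; auto. auto.
    intros t Ht. pose proof (pointwise b (INR n) t Hb ltac:(lra)) as Hp.
    pose proof (Rle_abs (- (exp (-2 * b * sin t) * g0 (INR n) t))) as Hq. rewrite Rabs_Ropp in Hq. lra.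
  - rewrite <- (is_RInt_unique _ _ _ _ (int_dHH b Hb)).
    apply RInt_le. left; apply PI_RGT_0. auto. eexists; apply int_dHH; auto.
    intros t Ht. pose proof (pointwise b (INR n) t Hb ltac:(lra)) as Hp.
    pose proof (Rle_abs (exp (-2 * b * sin t) * g0 (INR n) t)). lra.
Qed.

Lemma P0_zero n : (1 <= n)%nat -> P (g0 (INR n)) 0 = 0.
Proof.
  intros Hn. assert (HN : 1 <= INR n) by (apply (le_INR 1); auto). simpl in HN.
  unfold P.
  assert (H : is_RInt (fun t => exp (-2 * 0 * sin t) * g0 (INR n) t) 0 PI
     (minus (sin (2 * INR n * PI) / (2 * INR n)) (sin (2 * INR n * 0) / (2 * INR n)))).
  { apply (@is_RInt_derive R_CompleteNormedModule (fun t => sin (2 * INR n * t) / (2 * INR n))).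
  - intros t _. unfold g0. auto_derive. lra. rewrite Rmult_0_r, Rmult_0_l, exp_0. field. lra.
  - intros t _. apply (@ex_derive_continuous R_AbsRing R_NormedModule). unfold g0. auto_derive. auto. }
  apply (@is_RInt_unique R_CompleteNormedModule) in H. rewrite H.
  rewrite sin2N, Rmult_0_r, sin_0. unfold minus, plus, opp; simpl. field. lra.
Qed.

Lemma h_deriv N x : 1 <= N -> is_derive (fun x => x / (N^2 + x^2)) x ((N^2 - x^2) / (N^2 + x^2)^2).
Proof. intros HN. assert (0 < N^2 + x^2) by nra. auto_derive; [apply Rgt_not_eq; nra|]; field; nra. Qed.

Lemma h1_deriv N x : 1 <= N -> is_derive (fun x => (N^2 - x^2) / (N^2 + x^2)^2) x ((2*x^3 - 6*N^2*x) / (N^2 + x^2)^3).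
Proof. intros HN. assert (0 < N^2 + x^2) by nra. auto_derive; [apply Rgt_not_eq; nra|]; field; nra. Qed.

Lemma alg N x c D psi psi1 psi2 : 0 < x -> D = N^2 + x^2 -> 0 < D ->
  D * psi + (- (x/4)) * psi1 + (- (x^2/4)) * psi2 = x ->
  psi1 = c * ((N^2 - x^2) / D^2) ->
  psi2 - c * ((2*x^3 - 6*N^2*x) / D^3) =
  4 * D * (psi - c * (x / D)) / x^2 + 4 / x * (c - 1 - c * (N^4 - 6*N^2*x^2 + x^4) / (4 * D^3)).
Proof.
  intros Hx HD HD0 Hode H1.
  assert (E : psi2 * (x^2/4) = D*psi - x/4*psi1 - x) by lra.
  assert (psi2 = (D*psi - x/4*psi1 - x) / (x^2/4)) by (rewrite <- E; field; apply Rgt_not_eq; lra).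
  subst psi2 psi1. rewrite HD. field. split; apply Rgt_not_eq; nra.
Qed.

Lemma near0 (f f' : R -> R) x1 : (forall x, is_derive f x (f' x)) -> f 0 = 0 -> 0 < x1 ->
  forall eps, 0 < eps -> exists a, 0 < a < x1 /\ - eps < f a.
Proof.
  intros Hd H0 Hx1 eps He.
  assert (Hc : continuity_pt f 0).
  { apply continuity_pt_filterlim. apply (@ex_derive_continuous R_AbsRing R_NormedModule). eexists; apply Hd. }
  destruct (Hc eps He) as [alp [Halp Hlim]].
  exists (Rmin (alp/2) (x1/2)).
  pose proof (Rmin_l (alp/2) (x1/2)). pose proof (Rmin_r (alp/2) (x1/2)).
  assert (0 < Rmin (alp/2) (x1/2)) by (apply Rmin_glb_lt; lra).
  split. lra.
  assert (Hq : R_dist (f (Rmin (alp/2) (x1/2))) (f 0) < eps).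
  { apply Hlim. split. split. constructor. lra. simpl. unfold R_dist. rewrite Rminus_0_r, Rabs_right; lra. }
  unfold R_dist in Hq. rewrite H0, Rminus_0_r in Hq. apply Rabs_def2 in Hq. lra.
Qed.

Lemma nearinf x1 K : 0 <= K -> forall eps, 0 < eps -> exists b, x1 < b /\ 0 < b /\ (2 + PI) / (2 * b) + K / b < eps.
Proof.
  intros HK eps He. pose proof PI_RGT_0.
  set (b := Rmax (x1 + 1) (Rmax 1 (2 * (2 + PI + 2 * K) / eps))).
  assert (Hb1 : x1 + 1 <= b) by apply Rmax_l.
  assert (Hb2 : 1 <= b) by (eapply Rle_trans; [|apply Rmax_r]; apply Rmax_l).
  assert (Hb3 : 2 * (2 + PI + 2 * K) / eps <= b) by (eapply Rle_trans; [|apply Rmax_r]; apply Rmax_r).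
  exists b. split. lra. split. lra.
  replace ((2 + PI) / (2 * b) + K / b) with ((2 + PI + 2 * K) / (2 * b)) by (field; lra).
  apply (Rmult_le_compat_r (eps / 2)) in Hb3; [|lra].
  replace (2 * (2 + PI + 2 * K) / eps * (eps / 2)) with (2 + PI + 2 * K) in Hb3 by (field; lra).
  apply (Rmult_lt_reg_r (2 * b)). lra. unfold Rdiv. rewrite Rmult_assoc, Rinv_l, Rmult_1_r by lra. nra.
Qed.

Lemma poly_low a b : 0 <= a -> 0 <= b -> 0 <= 2*a^3 - 3*a^2*b + 4*a*b^2 + b^3.
Proof. intros Ha Hb. assert (0 <= a * (2 * (a - 3*b/4)^2 + (23/8) * b^2)) by (apply Rmult_le_pos; nra). nra. Qed.

Lemma lower_bound n x : (1 <= n)%nat -> 0 < x ->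
  4 * INR n ^ 2 / (4 * INR n ^ 2 + 1) * (x / (INR n ^ 2 + x ^ 2)) <= P (g0 (INR n)) x.
Proof.
  intros Hn Hx. assert (HN : 1 <= INR n) by (apply (le_INR 1); auto). simpl in HN.
  set (N := INR n) in *.
  set (c := 4 * N ^ 2 / (4 * N ^ 2 + 1)).
  assert (Hc0 : 0 < c) by (unfold c; apply Rdiv_lt_0_compat; nra).
  assert (Hc1 : c <= 1) by (unfold c; apply Rmult_le_reg_r with (4 * N^2 + 1); [nra|]; unfold Rdiv; rewrite Rmult_assoc, Rinv_l; nra).
  set (e := fun x => P (g0 N) x - c * (x / (N^2 + x^2))).
  set (e1 := fun x => P (g1 N) x - c * ((N^2 - x^2) / (N^2 + x^2)^2)).
  set (e2 := fun x => P (g2 N) x - c * ((2*x^3 - 6*N^2*x) / (N^2 + x^2)^3)).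
  assert (D1 : forall x, is_derive e x (e1 x)).
  { intros y. apply (@is_derive_minus R_AbsRing R_NormedModule).
    apply (P_deriv (g0 N) (cont_g0 N)).
    apply is_derive_scal. apply h_deriv; auto. }
  assert (D2 : forall x, is_derive e1 x (e2 x)).
  { intros y. apply (@is_derive_minus R_AbsRing R_NormedModule).
    apply (P_deriv (g1 N) (cont_g1 N)).
    apply is_derive_scal. apply h1_deriv; auto. }
  assert (Hm : 0 <= e x).
  { apply (maxprin e e1 e2 x Hx D1 D2).
    - intros y Hy Hey He1y.
      assert (HD : 0 < N^2 + y^2) by nra.
      pose proof (ode n y) as Hode. fold N in Hode.
      unfold e2. rewrite (alg N y c (N^2 + y^2) (P (g0 N) y) (P (g1 N) y) (P (g2 N) y) Hy eq_refl HD Hode).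
      2: { unfold e1 in He1y. lra. }
      unfold e in Hey.
      assert (T1 : 4 * (N ^ 2 + y ^ 2) * (P (g0 N) y - c * (y / (N ^ 2 + y ^ 2))) / y ^ 2 < 0).
      { apply Rdiv_neg_pos. apply Rmult_pos_neg. lra. lra. nra. }
      assert (T2 : c - 1 - c * (N ^ 4 - 6 * N ^ 2 * y ^ 2 + y ^ 4) / (4 * (N ^ 2 + y ^ 2) ^ 3) <= 0).
      { assert (HD3 : 0 < (N ^ 2 + y ^ 2) ^ 3) by (apply pow_lt; lra).
        replace (c - 1 - c * (N ^ 4 - 6 * N ^ 2 * y ^ 2 + y ^ 4) / (4 * (N ^ 2 + y ^ 2) ^ 3))
          with (- (((N^2 + y^2)^3 + N^2 * (N ^ 4 - 6 * N ^ 2 * y ^ 2 + y ^ 4)) / ((4 * N^2 + 1) * (N ^ 2 + y ^ 2) ^ 3))).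
        2: { unfold c. field. split; apply Rgt_not_eq; nra. }
        enough (0 <= ((N^2 + y^2)^3 + N^2 * (N ^ 4 - 6 * N ^ 2 * y ^ 2 + y ^ 4)) / ((4 * N^2 + 1) * (N ^ 2 + y ^ 2) ^ 3)) by lra.
        apply Rcomplements.Rdiv_le_0_compat.
        pose proof (poly_low (N^2) (y^2) ltac:(nra) ltac:(nra)). nra.
        apply Rmult_lt_0_compat; nra. }
      assert (T3 : 0 < 4 / y) by (apply Rdiv_lt_0_compat; lra).
      nra.
    - apply near0 with e1; auto. unfold e, N. rewrite P0_zero; auto. field. apply Rgt_not_eq. fold N. nra.
    - intros eps He. destruct (nearinf x c (Rlt_le _ _ Hc0) eps He) as [b [Hb1 [Hb2 Hb3]]].
      exists b. split; auto. unfold e.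
      pose proof (P_bound n b Hb2) as Hpb. fold N in Hpb. pose proof (Rle_abs (- P (g0 N) b)) as Hq. rewrite Rabs_Ropp in Hq.
      assert (b / (N^2 + b^2) <= / b).
      { assert (/ b - b / (N^2 + b^2) = N^2 / (b * (N^2 + b^2))) by (field; split; apply Rgt_not_eq; nra). assert (0 <= N^2 / (b * (N^2 + b^2))) by (apply Rcomplements.Rdiv_le_0_compat; [nra | apply Rmult_lt_0_compat; nra]). lra. }
      assert (c * (b / (N ^ 2 + b ^ 2)) <= c / b) by (unfold Rdiv at 2; apply Rmult_le_compat_l; lra).
      lra. }
  unfold e in Hm. cbv beta in Hm. lra.
Qed.

Lemma upper_bound n x : (1 <= n)%nat -> 0 < x ->
  P (g0 (INR n)) x <= 4 * INR n ^ 2 / (4 * INR n ^ 2 - 1) * (x / (INR n ^ 2 + x ^ 2)).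
Proof.
  intros Hn Hx. assert (HN : 1 <= INR n) by (apply (le_INR 1); auto). simpl in HN.
  set (N := INR n) in *.
  set (c := 4 * N ^ 2 / (4 * N ^ 2 - 1)).
  assert (Hc0 : 0 < c) by (unfold c; apply Rdiv_lt_0_compat; nra).
  set (e := fun x => c * (x / (N^2 + x^2)) - P (g0 N) x).
  set (e1 := fun x => c * ((N^2 - x^2) / (N^2 + x^2)^2) - P (g1 N) x).
  set (e2 := fun x => c * ((2*x^3 - 6*N^2*x) / (N^2 + x^2)^3) - P (g2 N) x).
  assert (D1 : forall x, is_derive e x (e1 x)).
  { intros y. apply (@is_derive_minus R_AbsRing R_NormedModule).
    apply is_derive_scal. apply h_deriv; auto.
    apply (P_deriv (g0 N) (cont_g0 N)). }
  assert (D2 : forall x, is_derive e1 x (e2 x)).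
  { intros y. apply (@is_derive_minus R_AbsRing R_NormedModule).
    apply is_derive_scal. apply h1_deriv; auto.
    apply (P_deriv (g1 N) (cont_g1 N)). }
  assert (Hm : 0 <= e x).
  { apply (maxprin e e1 e2 x Hx D1 D2).
    - intros y Hy Hey He1y.
      assert (HD : 0 < N^2 + y^2) by nra.
      pose proof (ode n y) as Hode. fold N in Hode.
      pose proof (alg N y c (N^2+y^2) _ _ _ Hy eq_refl HD Hode ltac:(unfold e1 in He1y; lra)) as Halg.
      unfold e in Hey. unfold e2.
      assert (T1 : 0 < 4 * (N ^ 2 + y ^ 2) * (P (g0 N) y - c * (y / (N ^ 2 + y ^ 2))) / y ^ 2).
      { apply Rdiv_lt_0_compat. apply Rmult_lt_0_compat. lra. lra. nra. }
      assert (T2 : 0 <= c - 1 - c * (N ^ 4 - 6 * N ^ 2 * y ^ 2 + y ^ 4) / (4 * (N ^ 2 + y ^ 2) ^ 3)).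
      { assert (HD3 : 0 < (N ^ 2 + y ^ 2) ^ 3) by (apply pow_lt; lra).
        replace (c - 1 - c * (N ^ 4 - 6 * N ^ 2 * y ^ 2 + y ^ 4) / (4 * (N ^ 2 + y ^ 2) ^ 3))
          with (((N^2 + y^2)^3 - N^2 * (N ^ 4 - 6 * N ^ 2 * y ^ 2 + y ^ 4)) / ((4 * N^2 - 1) * (N ^ 2 + y ^ 2) ^ 3)).
        2: { unfold c. field. split; apply Rgt_not_eq; nra. }
        apply Rcomplements.Rdiv_le_0_compat.
        nra.
        apply Rmult_lt_0_compat; nra. }
      assert (T3 : 0 <= 4 / y * (c - 1 - c * (N ^ 4 - 6 * N ^ 2 * y ^ 2 + y ^ 4) / (4 * (N ^ 2 + y ^ 2) ^ 3))).
      { apply Rmult_le_pos; auto. left; apply Rdiv_lt_0_compat; lra. }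
      lra.
    - apply near0 with e1; auto. unfold e, N. rewrite P0_zero; auto. field. apply Rgt_not_eq. fold N. nra.
    - intros eps He. destruct (nearinf x 0 (Rle_refl 0) eps He) as [b [Hb1 [Hb2 Hb3]]].
      exists b. split; auto. unfold e.
      pose proof (P_bound n b Hb2) as Hpb. fold N in Hpb. pose proof (Rle_abs (P (g0 N) b)) as Hq.
      unfold Rdiv at 2 in Hb3. rewrite Rmult_0_l, Rplus_0_r in Hb3.
      assert (0 <= c * (b / (N ^ 2 + b ^ 2))).
      { apply Rmult_le_pos. lra. apply Rcomplements.Rdiv_le_0_compat; nra. }
      lra. }
  unfold e in Hm. cbv beta in Hm. lra.
Qed.

Lemma imag_zero (n : nat) x :
  RInt (fun t => exp (-2 * x * sin t) * sin (2 * INR n * t)) 0 PI = 0.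
Proof.
  set (f := fun t => exp (-2 * x * sin t) * sin (2 * INR n * t)).
  assert (Hex : ex_RInt f (-1 * 0 + PI) (-1 * PI + PI)).
  { apply (@ex_RInt_continuous R_CompleteNormedModule). intros. apply (@ex_derive_continuous R_AbsRing R_NormedModule).
    unfold f. auto_derive. auto. }
  pose proof (@RInt_comp_lin R_CompleteNormedModule f (-1) PI 0 PI Hex) as H.
  replace (-1 * 0 + PI) with PI in H by ring. replace (-1 * PI + PI) with 0 in H by ring.
  assert (Hex2 : ex_RInt f 0 PI).
  { apply (@ex_RInt_continuous R_CompleteNormedModule). intros. apply (@ex_derive_continuous R_AbsRing R_NormedModule).
    unfold f. auto_derive. auto. }
  rewrite <- (@opp_RInt_swap R_CompleteNormedModule f 0 PI Hex2) in H.
  assert (E : RInt (fun y => scal (-1) (f (-1 * y + PI))) 0 PI = RInt f 0 PI).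
  { apply RInt_ext. intros t _. unfold f, scal; simpl. unfold mult; simpl.
    replace (-1 * t + PI) with (PI - t) by ring. rewrite sin_PI_x.
    replace (2 * INR n * (PI - t)) with (- (2 * INR n * t) + 2 * INR n * PI) by ring.
    rewrite sin_period, sin_neg. ring. }
  assert (Hq : RInt f 0 PI = opp (RInt f 0 PI)) by (etransitivity; [symmetry; exact E | exact H]).
  unfold opp in Hq; simpl in Hq. fold f. lra.
Qed.

Lemma phi_real n x : phi n x = RtoC (P (g0 (INR n)) x).
Proof.
  unfold phi. apply (@is_RInt_unique C_R_CompleteNormedModule).
  unfold RtoC.
  apply (is_RInt_fct_extend_pair (U:=R_NormedModule) (V:=R_NormedModule)).
  - apply (@is_RInt_ext R_NormedModule (fun t => exp (-2 * x * sin t) * g0 (INR n) t)).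
    + intros t _. unfold cexpi, g0. simpl. ring.
    + apply (@RInt_correct R_CompleteNormedModule). apply exP. apply cont_g0.
  - apply (@is_RInt_ext R_NormedModule (fun t => exp (-2 * x * sin t) * sin (2 * INR n * t))).
    + intros t _. unfold cexpi. simpl. ring.
    + assert (Hex : ex_RInt (fun t => exp (-2 * x * sin t) * sin (2 * INR n * t)) 0 PI).
      { apply (@ex_RInt_continuous R_CompleteNormedModule). intros. apply (@ex_derive_continuous R_AbsRing R_NormedModule).
        auto_derive. auto. }
      pose proof (@RInt_correct R_CompleteNormedModule _ _ _ Hex) as Hc. rewrite imag_zero in Hc. exact Hc.
Qed.

Theorem lemma3p5 (n : nat) (x : R) :
  (1 <= n)%nat -> 0 < x ->
  exists r s : R,
    varphi n x = RtoC r /\ phi n x = RtoC s /\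
    4 * INR n ^ 2 / (4 * INR n ^ 2 + 1) * (x / (1 + x ^ 2)) <= r /\
    r <= 4 * INR n ^ 2 / (4 * INR n ^ 2 - 1) * (x / (1 + x ^ 2)) /\
    4 * INR n ^ 2 / (4 * INR n ^ 2 + 1) * (x / (INR n ^ 2 + x ^ 2)) <= s /\
    s <= 4 * INR n ^ 2 / (4 * INR n ^ 2 - 1) * (x / (INR n ^ 2 + x ^ 2)).
Proof.
  intros Hn Hx. assert (HN : 1 <= INR n) by (apply (le_INR 1); auto). simpl in HN.
  exists (INR n * P (g0 (INR n)) (INR n * x)), (P (g0 (INR n)) x).
  assert (HNx : 0 < INR n * x) by nra.
  pose proof (lower_bound n x Hn Hx). pose proof (upper_bound n x Hn Hx).
  pose proof (lower_bound n _ Hn HNx) as L. pose proof (upper_bound n _ Hn HNx) as U.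
  set (N := INR n) in *.
  replace (4 * N ^ 2 / (4 * N ^ 2 + 1) * (N * x / (N ^ 2 + (N * x) ^ 2)))
    with (/ N * (4 * N ^ 2 / (4 * N ^ 2 + 1) * (x / (1 + x ^ 2)))) in L by (field; repeat split; apply Rgt_not_eq; nra).
  replace (4 * N ^ 2 / (4 * N ^ 2 - 1) * (N * x / (N ^ 2 + (N * x) ^ 2)))
    with (/ N * (4 * N ^ 2 / (4 * N ^ 2 - 1) * (x / (1 + x ^ 2)))) in U by (field; repeat split; apply Rgt_not_eq; nra).
  split; [|split; [|split; [|split]]].
  - unfold varphi. rewrite phi_real. unfold RtoC, Cmult. simpl. unfold N. f_equal; ring.
  - apply phi_real.
  - apply (Rmult_le_compat_l N) in L; [|lra]. rewrite <- Rmult_assoc, Rinv_r, Rmult_1_l in L by (apply Rgt_not_eq; lra). exact L.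
  - apply (Rmult_le_compat_l N) in U; [|lra]. rewrite <- Rmult_assoc, Rinv_r, Rmult_1_l in U by (apply Rgt_not_eq; lra). exact U.
  - auto.
Qed.
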